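(* The free semigroup of rank 1 with a zero adjoined, $\langle a,b\mid b^2=b,\ ab=ba=b\rangle$, is not isomorphic to any expanding automaton semigroup. Consequently (since the free semigroup of rank 1 is an expanding automaton semigroup), the class of expanding automaton semigroups is not closed under taking normal ideal extensions.
   Context: An expanding automaton is $(Q,\Sigma,t,o)$ with $Q$ a finite set of states, $\Sigma$ a finite alphabet, $t:Q\times\Sigma\to Q$ and $o:Q\times\Sigma\to\Sigma^+$. Each state $q$ induces $q:\Sigma^*\to\Sigma^*$ by $q(\emptyset)=\emptyset$, $q(\sigma w)=o(q,\sigma)\,q'(w)$ with $q'=t(q,\sigma)$; an expanding automaton semigroup is the semigroup of maps generated under composition by the states. For semigroups $S,T$, the normal ideal extension of $S$ by $T$ is the disjoint union $S\sqcup T$ with product $x\cdot y=xy$ if $x,y\in S$ or $x,y\in T$, $x\cdot y=y$ if $x\in S,y\in T$, and $x\cdot y=x$ if $x\in T,y\in S$. *)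

(* Defs.v *)
From mathcomp Require Import all_boot.
Set Implicit Arguments. Unset Strict Implicit. Unset Printing Implicit Defensive.

(* An expanding automaton (Q, Sigma, t, o): t : Q -> Sigma -> Q,
   o : Q -> Sigma -> Sigma^+ (nonemptiness is a separate hypothesis). *)

Fixpoint state_map (Q Sigma : Type) (t : Q -> Sigma -> Q)
    (o : Q -> Sigma -> seq Sigma) (q : Q) (w : seq Sigma) : seq Sigma :=
  match w with
  | [::] => [::]
  | s :: w' => o q s ++ state_map t o (t q s) w'
  end.

Inductive generated (Q Sigma : Type) (t : Q -> Sigma -> Q)
    (o : Q -> Sigma -> seq Sigma) : (seq Sigma -> seq Sigma) -> Prop :=
  | gen_state q : generated t o (state_map t o q)
  | gen_comp f g : generated t o f -> generated t o g ->
                   generated t o (g \o f).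

(* (S, op) is isomorphic to an expanding automaton semigroup.
   Convention: the product x y in the automaton semigroup is the map
   "apply x, then y", i.e. phi (x y) = phi y \o phi x. *)
Definition is_EA_semigroup (S : Type) (op : S -> S -> S) : Prop :=
  exists (Q Sigma : finType) (t : Q -> Sigma -> Q)
         (o : Q -> Sigma -> seq Sigma),
    (forall q s, o q s <> [::]) /\
    exists phi : S -> (seq Sigma -> seq Sigma),
      injective phi /\
      (forall f, generated t o f <-> exists x, phi x = f) /\
      (forall x y, phi (op x y) = phi y \o phi x).

(* Free semigroup of rank 1 with a zero adjoined,
   <a, b | b^2 = b, ab = ba = b>:  Some n represents a^(n+1), None is b = 0. *)
Definition free1_zero_mul (x y : option nat) : option nat :=
  match x, y with
  | Some m, Some n => Some (m + n).+1
  | _, _ => None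
  end.

Definition normal_ideal_ext (S T : Type) (opS : S -> S -> S)
    (opT : T -> T -> T) (x y : S + T) : S + T :=
  match x, y with
  | inl a, inl b => inl (opS a b)
  | inr a, inr b => inr (opT a b)
  | inl _, inr b => inr b
  | inr a, inl _ => inr a
  end.

Definition associative_op (S : Type) (op : S -> S -> S) : Prop :=
  forall x y z, op x (op y z) = op (op x y) z.

(* Main.v *)
Require Import Defs.
From mathcomp Require Import all_boot.
From Stdlib Require Import Lia Classical ClassicalEpsilon FunctionalExtensionality.

Set Implicit Arguments. Unset Strict Implicit. Unset Printing Implicit Defensive.

Definition sec (A : Type) (f : seq A -> seq A) (u : seq A) : seq A -> seq A :=
  fun w => drop (size (f u)) (f (u ++ w)).

Lemma state_cat (Q Sigma : Type) (t : Q -> Sigma -> Q) (o : Q -> Sigma -> seq Sigma) q u w :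
  state_map t o q (u ++ w) = state_map t o q u ++ state_map t o (foldl t q u) w.
Proof. elim: u q => [|s u IH] q //=. by rewrite IH catA. Qed.

Lemma sec_state (Q Sigma : Type) (t : Q -> Sigma -> Q) (o : Q -> Sigma -> seq Sigma) q u :
  sec (state_map t o q) u = state_map t o (foldl t q u).
Proof. apply: functional_extensionality => w. by rewrite /sec state_cat drop_size_cat. Qed.

Lemma sec_comp_aux (A : Type) (f g : seq A -> seq A) :
  (forall u w, f (u ++ w) = f u ++ sec f u w) ->
  (forall u w, g (u ++ w) = g u ++ sec g u w) ->
  forall u, sec (g \o f) u = sec g (f u) \o sec f u.
Proof.
move=> Hf Hg u; apply: functional_extensionality => w.
by rewrite {1}/sec /= Hf Hg drop_size_cat.
Qed.

Lemma gen_sec (Q Sigma : Type) (t : Q -> Sigma -> Q) (o : Q -> Sigma -> seq Sigma) f :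
  generated t o f ->
  (forall u w, f (u ++ w) = f u ++ sec f u w) /\
  (forall u, generated t o (sec f u)) /\ f [::] = [::].
Proof.
elim=> [q | f1 g _ [Hf1 [Hf2 Hf3]] _ [Hg1 [Hg2 Hg3]]].
  split; first by move=> u w; rewrite sec_state state_cat.
  split => // u; rewrite sec_state; exact: gen_state.
split.
  move=> u w; rewrite (sec_comp_aux Hf1 Hg1) /= Hf1 Hg1 //.
split; last by rewrite /= Hf3 Hg3.
move=> u; rewrite (sec_comp_aux Hf1 Hg1); exact: gen_comp.
Qed.

Lemma gen_size (Q Sigma : Type) (t : Q -> Sigma -> Q) (o : Q -> Sigma -> seq Sigma) f :
  (forall q s, o q s <> [::]) -> generated t o f -> forall w, size w <= size (f w).
Proof.
move=> Hne; elim=> [q | f1 g _ Hf _ Hg] w.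
  elim: w q => [|s w IH] q //=.
  rewrite size_cat; case E: (o q s) => [|x l]; first by have := Hne q s; rewrite E.
  by rewrite /= addSn ltnS; exact: leq_trans (IH _) (leq_addl _ _).
exact: leq_trans (Hf w) (Hg (f1 w)).
Qed.

Lemma decode (A : Type) (v v' : seq A) :
  (forall i, nth None (map Some v) i = nth None (map Some v') i) -> v = v'.
Proof.
elim: v v' => [|a v IH] [|b v'] H //.
- by have := H 0.
- by have := H 0.
- have := H 0; case=> ->; congr (_ :: _); apply: IH => i; exact: H i.+1.
Qed.

Definition pb (P : Prop) : bool := if excluded_middle_informative P then true else false.
Lemma pbP P : reflect P (pb P).
Proof. rewrite /pb; case: excluded_middle_informative => H; by constructor. Qed.

Lemma notEA : ~ is_EA_semigroup free1_zero_mul.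
Proof.
move=> [Q [Sigma [t [o [Hne [phi [Hinj [Hgen Hhom]]]]]]]].
set Z := phi None.
have genphi : forall x, generated t o (phi x) by move=> x; apply/Hgen; exists x.
have ZL : forall x, Z \o phi x = Z.
  by move=> x; rewrite /Z -Hhom; case: x.
have ZR : forall x, phi x \o Z = Z.
  by move=> x; rewrite /Z -Hhom.
have homS : forall m n, phi (Some n) \o phi (Some m) = phi (Some (m + n).+1).
  by move=> m n; rewrite -Hhom.
have secgen : forall f u, generated t o f -> exists y, phi y = sec f u.
  move=> f u Hf; apply/Hgen; have [_ [H _]] := gen_sec Hf; exact: H.
have seccomp : forall x y u, sec (phi y \o phi x) u = sec (phi y) (phi x u) \o sec (phi x) u.
  move=> x y u; have [H1 _] := gen_sec (genphi x); have [H2 _] := gen_sec (genphi y).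
  exact: sec_comp_aux.
have [q0 [n0 Hq0]] : exists q n, state_map t o q = phi (Some n).
  apply: NNPP => H.
  have allZ : forall f, generated t o f -> f = Z.
    move=> f Hf; elim: Hf => [q | f1 g _ E1 _ E2]; last by rewrite E1 E2 ZL.
    have [x Hx] : exists x, phi x = state_map t o q by apply/Hgen; exact: gen_state.
    case: x Hx => [n|] Hx; last by rewrite -Hx.
    by exfalso; apply: H; exists q, n.
  by have := Hinj _ _ (allZ _ (genphi (Some 0))).
have xq_ex : forall q, {x | phi x = state_map t o q}.
  move=> q; apply: constructive_indefinite_description; apply/Hgen; exact: gen_state.
pose xq q := proj1_sig (xq_ex q).
have Hxq : forall q, phi (xq q) = state_map t o q by move=> q; exact: proj2_sig (xq_ex q).
pose score q := if xq q is Some n then n.+1 else 0.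
have Qne : 0 < #|Q| by apply/card_gt0P; exists q0.
have [qm Hqm] := eq_bigmax score Qne.
have xq0 : xq q0 = Some n0 by apply: Hinj; rewrite Hxq.
have [M xqm] : exists M, xq qm = Some M.
  have := @leq_bigmax _ score q0; rewrite Hqm /score xq0.
  by case: (xq qm) => [M|] //; exists M.
set B := phi (Some M).
have HB : B = state_map t o qm by rewrite /B -xqm Hxq.
have maxi : forall q m, state_map t o q = phi (Some m) -> m <= M.
  move=> q m H; have E : xq q = Some m by apply: Hinj; rewrite Hxq.
  have := @leq_bigmax _ score q; by rewrite Hqm /score E xqm.
have lower : forall n u, sec (phi (Some n)) u = Z \/
    exists j, n <= j /\ sec (phi (Some n)) u = phi (Some j).
  elim=> [|n IH] u.
    have [y Hy] := secgen _ u (genphi (Some 0)).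
    case: y Hy => [j|] Hy; [right; exists j; by [] | by left; rewrite -Hy].
  have -> : phi (Some n.+1) = phi (Some 0) \o phi (Some n) by rewrite homS addn0.
  rewrite seccomp.
  have [y Hy] := secgen _ (phi (Some n) u) (genphi (Some 0)).
  rewrite -Hy; case: (IH u) => [-> | [j [Hj ->]]]; first by left; rewrite ZR.
  case: y {Hy} => [j1|]; last by left; rewrite ZL.
  right; exists (j + j1).+1; split; last by rewrite homS.
  by rewrite ltnS (leq_trans Hj) // leq_addr.
have Bsec : forall u, sec B u = Z \/ sec B u = B.
  move=> u; case: (lower M u) => [|[j [Hj Hs]]]; first by left.
  right; rewrite Hs.
  have : j <= M.
    apply: (maxi (foldl t qm u)); by rewrite -sec_state -HB.
  by move=> HjM; have -> : j = M by apply/eqP; rewrite eqn_leq HjM Hj.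
pose Bp k := phi (Some (k * M.+1 + M)).
have BpS : forall k, Bp k.+1 = B \o Bp k.
  move=> k; rewrite /Bp /B homS; congr (phi (Some _)).
  rewrite mulSn -!plusE -!multE; lia.
have Bpsec : forall k u, sec (Bp k) u = Z \/ sec (Bp k) u = Bp k.
  elim=> [|k IH] u; first by rewrite /Bp mul0n add0n; exact: Bsec.
  rewrite BpS /B seccomp -/B.
  case: (IH u) => [-> | ->].
    by left; have [y <-] := secgen _ (Bp k u) (genphi (Some M)); rewrite ZR.
  by case: (Bsec (Bp k u)) => ->; [left; rewrite ZL | right].
have Bpsize : forall k v, size (Bp k v) <= size (Z v).
  move=> k v; apply: leq_trans (gen_size Hne (genphi None) (Bp k v)) _.
  have E : (Z \o Bp k) v = Z v by rewrite /Bp ZL.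
  by rewrite /= in E; rewrite -/Z E.
pose L := \max_(s : Sigma) size (Z [:: s]).
have BpL : forall k s, size (Bp k [:: s]) <= L.
  move=> k s; exact: leq_trans (Bpsize k [:: s]) (@leq_bigmax _ (fun s => size (Z [:: s])) s).
pose T := {ffun Sigma -> {ffun 'I_L -> option Sigma} * bool}.
pose enc (v : seq Sigma) : {ffun 'I_L -> option Sigma} := [ffun i : 'I_L => nth None (map Some v) i].
pose isZ k s : bool := pb (sec (Bp k) [:: s] = Z).
pose D (k : nat) : T := [ffun s => (enc (Bp k [:: s]), isZ k s)].
pose fD (i : 'I_(#|T|.+1)) := D i.
have [i [j [Hij Hne']]] : exists i j, fD i = fD j /\ i <> j.
  apply: NNPP => H.
  have finj : injective fD.
    move=> i j Hij; apply: NNPP => Hn; apply: H; by exists i, j.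
  by have := @leq_card _ _ fD finj; rewrite card_ord ltnn.
have encinj : forall v v', size v <= L -> size v' <= L -> enc v = enc v' -> v = v'.
  move=> v v' Hv Hv' He; apply: decode => n.
  case: (ltnP n L) => Hn.
    by have := congr1 (fun F : {ffun 'I_L -> option Sigma} => F (Ordinal Hn)) He; rewrite !ffunE.
  by rewrite !nth_default // size_map (leq_trans _ Hn).
have Beq : Bp i = Bp j.
  apply: functional_extensionality => w; elim: w => [|s w IH].
    rewrite /Bp; by have [_ [_ ->]] := gen_sec (genphi (Some (i * M.+1 + M)));
       have [_ [_ ->]] := gen_sec (genphi (Some (j * M.+1 + M))).
  have Dij := congr1 (fun F : T => F s) Hij; rewrite /fD /D !ffunE in Dij.
  case: Dij => Henc Hz.
  have E1 := encinj _ _ (BpL i s) (BpL j s) Henc.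
  have Hsec : sec (Bp i) [:: s] w = sec (Bp j) [:: s] w.
    move: Hz; rewrite /isZ.
    case: (pbP (sec (Bp i) [:: s] = Z)) => Hi; case: (pbP (sec (Bp j) [:: s] = Z)) => Hj //.
      by rewrite Hi Hj.
    move=> _.
    have -> : sec (Bp i) [:: s] = Bp i by case: (Bpsec i [:: s]).
    have -> : sec (Bp j) [:: s] = Bp j by case: (Bpsec j [:: s]).
    exact: IH.
  have [H1 _] := gen_sec (genphi (Some (i * M.+1 + M))).
  have [H2 _] := gen_sec (genphi (Some (j * M.+1 + M))).
  move: E1 Hsec; rewrite /Bp => E1 Hsec.
  by rewrite -[s :: w]/([:: s] ++ w) (H1 [:: s] w) (H2 [:: s] w) E1 Hsec.
have := Hinj _ _ Beq; case => /eqP; rewrite eqn_add2r eqn_pmul2r // => /eqP Hij'.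
by apply: Hne'; apply: val_inj.
Qed.

Definition opN (m n : nat) : nat := (m + n).+1.
Definition opU (x y : unit) : unit := tt.

Definition tN (q : unit) (s : unit) : unit := tt.
Definition oN (q : unit) (s : unit) : seq unit := [:: tt; tt].
Definition phiN (n : nat) : seq unit -> seq unit := fun w => nseq (2 ^ n.+1 * size w) tt.

Lemma phiN0 : state_map tN oN tt = phiN 0.
Proof.
apply: functional_extensionality => w; elim: w => [|s w IH] //=.
rewrite IH /phiN expn1 mulnS; by [].
Qed.

Lemma phiN_comp x y : phiN y \o phiN x = phiN (opN x y).
Proof.
apply: functional_extensionality => w; rewrite /phiN /opN /= size_nseq mulnA -expnD.
congr (nseq (2 ^ _ * _) tt); by rewrite addSn addnS addnC.
Qed.

Lemma EA_N : is_EA_semigroup opN.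
Proof.
exists unit, unit, tN, oN; split; first by [].
exists phiN; split.
  move=> m n H; have := congr1 (fun F => size (F [:: tt])) H.
  rewrite /phiN !size_nseq !muln1 => /(expnI (isT : 1 < 2)); by case.
split; last by move=> x y; rewrite phiN_comp.
move=> f; split.
  elim=> [q | f1 g _ [x <-] _ [y <-]]; first by case: q; exists 0; rewrite phiN0.
  by exists (opN x y); rewrite phiN_comp.
move=> [n <-]; elim: n => [|n IH]; first by rewrite -phiN0; exact: gen_state.
have -> : phiN n.+1 = phiN 0 \o phiN n by rewrite phiN_comp /opN addn0.
apply: gen_comp => //; rewrite -phiN0; exact: gen_state.
Qed.

Definition oU (q : unit) (s : unit) : seq unit := [:: s].

Lemma smU w : state_map tN oU tt w = w.
Proof. by elim: w => [|s w IH] //=; rewrite IH. Qed.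

Lemma EA_U : is_EA_semigroup opU.
Proof.
exists unit, unit, tN, oU; split; first by [].
exists (fun _ => state_map tN oU tt); split; first by move=> [] [].
split; last first.
  move=> x y; apply: functional_extensionality => w; by rewrite /= !smU.
move=> f; split; last by move=> [x <-]; exact: gen_state.
elim=> [q | f1 g _ [x <-] _ [y <-]]; first by case: q; exists tt.
exists tt; apply: functional_extensionality => w; by rewrite /= !smU.
Qed.

Lemma ext_not_EA : ~ is_EA_semigroup (normal_ideal_ext opN opU).
Proof.
move=> [Q [Sigma [t [o [Hne [phi [Hinj [Hgen Hhom]]]]]]]].
apply: notEA; exists Q, Sigma, t, o; split => //.
pose h (x : option nat) : nat + unit := if x is Some n then inl n else inr tt.
exists (fun x => phi (h x)); split.
  move=> x y /Hinj; case: x => [m|]; case: y => [n|] //=; by case=> ->.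
split.
  move=> f; rewrite Hgen; split; last by move=> [x <-]; exists (h x).
  move=> [y <-]; exists (if y is inl n then Some n else None).
  by case: y => [n|[]].
move=> x y; rewrite -Hhom; congr phi; by case: x => [m|]; case: y => [n|].
Qed.

Theorem mainTheorem15 :
  (~ is_EA_semigroup free1_zero_mul) /\
  (exists (S T : Type) (opS : S -> S -> S) (opT : T -> T -> T),
      associative_op opS /\ associative_op opT /\
      is_EA_semigroup opS /\ is_EA_semigroup opT /\
      ~ is_EA_semigroup (normal_ideal_ext opS opT)).
Proof.
split; first exact: notEA.
exists nat, unit, opN, opU; split.
  by move=> x y z; rewrite /opN addnS addSn addnA.
split; first by move=> [] [] [].
split; first exact: EA_N.
split; first exact: EA_U.
exact: ext_not_EA.
Qed.
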